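(* Let $n\ge1$. For every $c\in M_n$ we have $C(c)\in M_n$ and $C^n(c)=c$, where $C$ is the crawl map.
   Context: $M_n$ is the set of integer sequences $c=(c_1,\dots,c_n)$ for which there is $0\le k\le n-1$ with $c_1=\dots=c_k=0$, $c_{k+1},\dots,c_n>0$, and $\sum_{i=k+1}^{n}c_i=n$. The crawl map $C:M_n\to M_n$ sends $c$ to $c'$ where, for $1\le i\le n-1$, $c'_i=\max\{0,c_{i+1}-1\}$ if $c_1,\dots,c_i\le1$, and $c'_i=c_{i+1}$ otherwise; and $c'_n=n-\sum_{i=1}^{n-1}c'_i$. *)

(* Defs.v *)
From mathcomp Require Import all_boot all_order all_algebra.
Set Implicit Arguments. Unset Strict Implicit. Unset Printing Implicit Defensive.
Import Order.TTheory GRing.Theory Num.Theory.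
Local Open Scope ring_scope.

(* Sequences c = (c_1,...,c_n) are represented as s : seq int of size n,
   with c_i = nth 0 s (i-1)  (0-based indexing internally). *)

Definition inM (n : nat) (c : seq int) : Prop :=
  size c = n /\
  exists k : nat, (k <= n.-1)%N /\
    (forall i : nat, (i < k)%N -> nth 0 c i = 0) /\
    (forall i : nat, (k <= i < n)%N -> 0 < nth 0 c i) /\
    \sum_(k <= i < n) nth 0 c i = n%:Z.

(* The crawl map (0-based): for j < n-1 (i.e. i = j+1 in 1..n-1),
   c'_{j} = max(0, c_{j+1} - 1) if c_0..c_j <= 1, else c_{j+1};
   c'_{n-1} = n - sum_{j<n-1} c'_j. *)
Definition crawl_entry (c : seq int) (j : nat) : int :=
  if all (fun x => x <= 1) (take j.+1 c)
  then Num.max 0 (nth 0 c j.+1 - 1)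
  else nth 0 c j.+1.

Definition crawl (n : nat) (c : seq int) : seq int :=
  let front := mkseq (crawl_entry c) n.-1 in
  rcons front (n%:Z - \sum_(x <- front) x).

(* Main.v *)
Require Import Defs.
From mathcomp Require Import all_boot all_order all_algebra zify.
Set Implicit Arguments. Unset Strict Implicit. Unset Printing Implicit Defensive.
Definition tau (w : seq bool) := rcons (behead w) (~~ head false w).
Definition Cw (w : seq bool) := iter (find negb w).+1 tau w.

Section C.
Variables (n : nat) (w : seq bool).
Hypotheses (n0 : 0 < n) (sw : size w = n) (lw : nth false w n.-1 = true).

Definition xx i := odd (i %/ n) (+) nth false w (i %% n).
Definition win i := mkseq (fun k => xx (i + k)) n.

Lemma xxn i : xx (i + n) = ~~ xx i.
Proof.
rewrite /xx -{1}(mul1n n) addnC divnMDl // modnDr oddD /=.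
by case: (odd _); case: (nth _ _ _).
Qed.

Lemma tau_win i : tau (win i) = win i.+1.
Proof.
have [m em] : exists m, n = m.+1 by exists n.-1; rewrite prednK.
apply: (@eq_from_nth _ false).
  by rewrite /tau size_rcons size_behead !size_mkseq em.
rewrite /tau size_rcons size_behead size_mkseq em /= => k kn.
rewrite nth_rcons size_behead size_mkseq em /=.
case: ltnP => kn1.
  rewrite nth_behead /win em !nth_mkseq //.
  by rewrite addSnnS.
have ek : k = m by apply/eqP; rewrite eqn_leq kn1 -ltnS kn.
rewrite ek eqxx /win em nth_mkseq // /= addn0.
by rewrite addSnnS -em xxn.
Qed.

Lemma iter_tau_win m i : iter m tau (win i) = win (i + m).
Proof. elim: m => [|m IH]; first by rewrite addn0. by rewrite iterS IH tau_win addnS. Qed.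

Lemma win0 : win 0 = w.
Proof.
apply: (@eq_from_nth _ false); first by rewrite size_mkseq sw.
rewrite size_mkseq => k kn; rewrite nth_mkseq // /xx add0n divn_small // modn_small //.
Qed.

Lemma win2n : win (n + n) = w.
Proof.
rewrite -win0 /win; apply: eq_mkseq => k.
by rewrite add0n addnC addnA !xxn negbK.
Qed.

Definition cnt t := count (fun k => ~~ xx k) (iota 0 t).

Lemma cntS t : cnt t.+1 = cnt t + ~~ xx t.
Proof. by rewrite /cnt -addn1 iotaD count_cat /= addn0. Qed.

Lemma cnt_mono a b : a <= b -> cnt a <= cnt b.
Proof.
move=> ab; rewrite /cnt -(subnKC ab) iotaD count_cat leq_addr //.
Qed.

Lemma cnt_find i : cnt (i + (find negb (win i)).+1) = (cnt i).+1 /\ xx (i + find negb (win i)) = false.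
Proof.
set f := find negb (win i).
have fle : f <= n by rewrite /f -(size_mkseq (fun k => xx (i + k)) n) find_size.
have bef : forall k, k < f -> xx (i + k) = true.
  move=> k kf; have := before_find false kf; rewrite nth_mkseq; first by move/negbFE.
  exact: leq_trans kf fle.
have atf : xx (i + f) = false.
  case: (ltnP f n) => fn.
    have hh : has negb (win i) by rewrite has_find size_mkseq.
    have := nth_find false hh; rewrite -/f nth_mkseq //.
    by move/negbTE.
  have ef : f = n by apply/eqP; rewrite eqn_leq fle fn.
  rewrite ef xxn (_ : xx i = true) //.
  by rewrite -(addn0 i) bef // ef.
split=> //.
have H : forall m, m <= f -> cnt (i + m) = cnt i.
  elim=> [|m IH] mf; first by rewrite addn0.
  by rewrite addnS cntS IH ?bef ?(ltnW mf) // addn0.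
by rewrite addnS cntS H // atf addn1.
Qed.

Lemma iterCw k : exists R, iter k Cw w = win R /\ cnt R = k /\ (R = 0 \/ xx R.-1 = false).
Proof.
elim: k => [|k [R [e [c h]]]]; first by exists 0; rewrite win0; split => //; split => //; left.
exists (R + (find negb (win R)).+1); rewrite iterS e /Cw iter_tau_win.
have [c1 c2] := cnt_find R; split=> //; split; first by rewrite c1 c.
by right; rewrite addnS /=.
Qed.

Lemma Cw_period : iter n Cw w = w.
Proof.
have [R [e [c h]]] := iterCw n.
have x2n : xx (n + n).-1 = false.
  have -> : (n + n).-1 = n.-1 + n by lia.
  rewrite xxn /xx divn_small ?prednK ?ltnSn // modn_small ?prednK ?ltnSn //.
  by rewrite lw.
have c2n : cnt (n + n) = n.
  rewrite /cnt iotaD count_cat add0n.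
  have -> : count (fun k => ~~ xx k) (iota n n) = count xx (iota 0 n).
    rewrite -(addn0 n) iotaDl count_map addn0; apply: eq_count => k /=.
    by rewrite addnC xxn negbK.
  by rewrite addnC; have := count_predC xx (iota 0 n); rewrite size_iota.
suff eR : R = n + n by rewrite e eR win2n.
case: (posnP R) => [R0|Rpos]; first by move: c n0; rewrite R0 /cnt /= => <-.
case: h => h; first by rewrite h in Rpos.
have cR : cnt R = (cnt R.-1).+1 by rewrite -{1}(prednK Rpos) cntS h addn1.
have c2 : cnt (n + n) = (cnt (n + n).-1).+1.
  by rewrite -{1}(prednK (_ : 0 < n + n)) ?cntS ?x2n ?addn1 // addn_gt0 n0.
apply/eqP; rewrite eqn_leq; apply/andP; split.
  rewrite leqNgt; apply/negP => lt.
  have := cnt_mono (_ : n + n <= R.-1); rewrite -ltnS prednK // => /(_ lt).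
  by rewrite c2n -ltnS -cR c ltnn.
rewrite leqNgt; apply/negP => lt.
have := cnt_mono (_ : R <= (n + n).-1); rewrite -ltnS prednK ?addn_gt0 ?n0 // => /(_ lt).
by rewrite c -ltnS -c2 c2n ltnn.
Qed.
End C.

Import Order.TTheory GRing.Theory Num.Theory.
Local Open Scope ring_scope.

Definition posi (x : int) : bool := 0 < x.
Definition wd (x : int) : seq bool :=
  if 0 < x then rcons (nseq (absz x).-1 false) true else [::].
Definition word (s : seq int) := flatten (map wd s).

Lemma word_cat s t : word (s ++ t) = word s ++ word t.
Proof. by rewrite /word map_cat flatten_cat. Qed.

Lemma word_cons x s : word (x :: s) = wd x ++ word s.
Proof. by []. Qed.

Lemma word_nseq0 k : word (nseq k 0) = [::].
Proof. by elim: k. Qed.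

Lemma word_nseq1 i : word (nseq i 1) = nseq i true.
Proof. elim: i => // i IH. change (word (1 :: nseq i 1) = true :: nseq i true). by rewrite word_cons IH. Qed.

Lemma wdS m : wd (m.+1)%:Z = rcons (nseq m false) true.
Proof. by []. Qed.

Lemma size_word p : all posi p -> (size (word p))%:Z = \sum_(x <- p) x.
Proof.
elim: p => [|x p IH] /=; first by rewrite big_nil.
move=> /andP [px ap]; rewrite big_cons word_cons size_cat PoszD IH //.
case: x px => [[|m]|m] //= _.
by rewrite size_rcons size_nseq.
Qed.

Lemma last_word p : all posi p -> p != [::] -> last false (word p) = true.
Proof.
case/lastP: p => // R x; rewrite all_rcons => /andP [px _] _; rewrite /posi in px.
rewrite -cats1 word_cat /word /= cats0 /wd px last_cat last_rcons //.
Qed.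

Lemma prefix_inj a b (s t : seq bool) :
  nseq a false ++ true :: s = nseq b false ++ true :: t -> a = b /\ s = t.
Proof.
elim: a b => [|a IH] [|b] //=; first by case.
by case=> /IH [-> ->].
Qed.

Lemma word_inj p q : all posi p -> all posi q -> word p = word q -> p = q.
Proof.
elim: p q => [|x p IH] [|y q] //=.
- by move=> _ /andP [py _]; rewrite /posi in py; rewrite word_cons /wd py; case: (absz y).-1.
- by move=> /andP [px _] _; rewrite /posi in px; rewrite word_cons /wd px; case: (absz x).-1.
move=> /andP [px ap] /andP [py aq]; rewrite /posi in px py; rewrite !word_cons /wd px py -!cats1 -!catA /=.
move/prefix_inj => [e1 e2]; rewrite (IH q) //.
case: x px e1 => [[|x]|x] // _; case: y py => [[|y]|y] //= _ ->. done.
Qed.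

Lemma iter_tau m w : (m <= size w)%N -> iter m tau w = drop m w ++ map negb (take m w).
Proof.
elim: m => [|m IH] mw /=; first by rewrite drop0 take0 cats0.
rewrite IH ?(ltnW mw) // (drop_nth false mw) /tau /= (take_nth false mw) map_rcons.
by rewrite rcons_cat.
Qed.

Lemma all_take_le (u R : seq int) (a : int) m : all (fun x => x <= 1) u -> 1 < a ->
  all (fun x => x <= 1) (take m (u ++ a :: R)) = (m <= size u)%N.
Proof.
move=> au a1; rewrite take_cat; case: ltnP => mu.
  rewrite (ltnW mu); apply/allP => x /mem_take xu; exact: (allP au x xu).
case: (ltnP (size u) m) => mu'.
  rewrite all_cat au /=.
  have -> : (m - size u = (m - size u).-1.+1)%N by lia.
  by rewrite /= leNgt a1.
have -> : m = size u by apply/eqP; rewrite eqn_leq mu mu'.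
by rewrite subnn take0 cats0.
Qed.

Lemma sumz_nseq0 k : \sum_(x <- nseq k (0:int)) x = 0.
Proof. by elim: k => [|k IH]; rewrite ?big_nil // big_cons IH addr0. Qed.

Lemma crawl_gen n (u R : seq int) (a : int) :
  all (fun x => 0 <= x <= 1) u -> 1 < a -> (size u + 1 + size R = n)%N -> (0 < size u)%N ->
  crawl n (u ++ a :: R) =
  nseq (size u).-1 0 ++ (a - 1) :: rcons R (n%:Z - (a - 1 + \sum_(x <- R) x)).
Proof.
move=> au a1 sz u0.
have au' : all (fun x => x <= 1) u by apply: sub_all au => x /andP [].
set F := nseq (size u).-1 0 ++ (a - 1) :: R.
have eF : mkseq (crawl_entry (u ++ a :: R)) n.-1 = F.
  apply: (@eq_from_nth _ 0).
    by rewrite size_mkseq /F size_cat size_nseq /=; lia.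
  rewrite size_mkseq => j jn; rewrite nth_mkseq // /crawl_entry all_take_le //.
  rewrite /F !nth_cat size_nseq.
  case: (ltnP j.+1 (size u)) => h1.
    rewrite (ltnW h1) nth_nseq (_ : (j < (size u).-1)%N) ?h1 //; last by lia.
    have := allP au (nth 0 u j.+1) (mem_nth 0 h1); move=> /andP [h2 h3].
    by lia.
  case: (ltnP (size u) j.+1) => h2.
    rewrite ltnNge (_ : ((size u).-1 <= j)%N) /=; last by lia.
    have -> : (j.+1 - size u = (j - size u).+1)%N by lia.
    have -> : (j - (size u).-1 = (j - size u).+1)%N by lia.
    by [].
  have ej : j = (size u).-1 by lia.
  rewrite ej ltnn subnn /= (_ : ((size u).-1.+1 - size u = 0)%N) /=; last by lia.
  by lia.
rewrite /crawl eF /F rcons_cat rcons_cons.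
congr (_ ++ _ :: rcons _ (_ - _)); rewrite big_cat sumz_nseq0 big_cons; exact: add0r.
Qed.

Lemma crawl_ones n : (0 < n)%N -> crawl n (nseq n 1) = nseq n.-1 0 ++ [:: n%:Z].
Proof.
move=> n0.
have eF : mkseq (crawl_entry (nseq n 1)) n.-1 = nseq n.-1 0.
  apply: (@eq_from_nth _ 0); first by rewrite size_mkseq size_nseq.
  rewrite size_mkseq => j jn; rewrite nth_mkseq // /crawl_entry nth_nseq jn.
  have -> : all (fun x : int => x <= 1) (take j.+1 (nseq n 1)).
    by apply/allP => x /mem_take /nseqP [-> _].
  rewrite nth_nseq (_ : (j.+1 < n)%N) //; lia.
rewrite /crawl eF -cats1; congr (_ ++ [:: _]).
rewrite sumz_nseq0; exact: subr0.
Qed.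

Lemma sum_ge_size (p : seq int) : all posi p -> (size p)%:Z <= \sum_(x <- p) x.
Proof.
elim: p => [|x p IH] /=; first by rewrite big_nil.
move=> /andP [px ap]; rewrite big_cons -add1n PoszD lerD //; last exact: IH.
Qed.

Lemma sumz_nseq1 k : \sum_(x <- nseq k (1:int)) x = k%:Z.
Proof. elim: k => [|k IH]; rewrite ?big_nil // big_cons IH; lia. Qed.

Lemma find_negb_nseq i T : find negb (nseq i true ++ false :: T) = i.
Proof. by elim: i => //= i ->. Qed.

Lemma find_nseq_true n : find negb (nseq n true) = n.
Proof. by elim: n => //= n ->. Qed.

Lemma step n p : (0 < n)%N -> all posi p -> \sum_(x <- p) x = n%:Z ->
  exists q, crawl n (nseq (n - size p) 0 ++ p) = nseq (n - size q) 0 ++ q /\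
    all posi q /\ \sum_(x <- q) x = n%:Z /\ word q = Cw (word p).
Proof.
move=> n0 ap sp.
have szp : (size p <= n)%N by rewrite -lez_nat -sp sum_ge_size.
set i := find (fun x => x != 1) p.
case: (ltnP i (size p)) => hi.
  have tp : take i p = nseq i 1.
    have st : size (take i p) = i by rewrite size_takel // ltnW.
    rewrite -{2}st; apply/all_pred1P/(all_nthP 0) => j; rewrite st => jl.
    rewrite nth_take //; have := before_find 0 jl; rewrite -/i => /negbFE //.
  have ep : p = nseq i 1 ++ nth 0 p i :: drop i.+1 p.
    by rewrite -{1}(cat_take_drop i p) (drop_nth 0 hi) tp.
  have a1 : nth 0 p i != 1.
    by have := nth_find 0 (_ : has (fun x => x != 1) p); rewrite has_find; apply.
  have a0 : 0 < nth 0 p i by exact: (all_nthP 0 ap _ hi).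
  move: ep a1 a0; set R := drop i.+1 p; case: (nth 0 p i) => [[|[|m]]|m] // ep _ _.
  have aR : all posi R.
    by move: ap; rewrite ep all_cat => /andP [_] /andP [_].
  have sR := sum_ge_size aR.
  have sp' : \sum_(x <- p) x = i%:Z + (m.+2)%:Z + \sum_(x <- R) x.
    rewrite {1}ep big_cat big_cons sumz_nseq1; exact: addrA.
  have szp' : size p = (i + 1 + size R)%N by rewrite {1}ep size_cat size_nseq /=; lia.
  have spn : (size p < n)%N.
    by rewrite -ltz_nat -sp sp' szp'; set S := \sum_(x <- R) x in sR *; lia.
  exists ((m.+1)%:Z :: rcons R (i.+1)%:Z); split.
    rewrite {2}ep catA crawl_gen //.
    - rewrite size_cat !size_nseq /= size_rcons; congr (nseq _ _ ++ _ :: rcons _ _).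
      + lia.
      + rewrite -sp sp'; set S := \sum_(x <- R) x in sR *; lia.
    - by rewrite all_cat !all_nseq /= !orbT.
    - rewrite size_cat !size_nseq; lia.
    - rewrite size_cat size_nseq; lia.
  split; first by rewrite /= all_rcons aR.
  split.
    rewrite big_cons -cats1 big_cat big_seq1 -sp sp'.
    set S := \sum_(x <- R) x; simpl; lia.
  set T := nseq m false ++ true :: word R.
  have ew : word p = nseq i true ++ false :: T.
    by rewrite {1}ep word_cat word_nseq1 word_cons wdS /= -cats1 -!catA.
  rewrite /Cw ew find_negb_nseq iter_tau; last by rewrite size_cat size_nseq /=; lia.
  rewrite -cat_rcons drop_size_cat ?take_size_cat ?size_rcons ?size_nseq //.
  rewrite map_rcons map_nseq /= word_cons wdS -(cats1 R) word_cat /T.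
  rewrite (_ : word [:: i.+1%:Z] = rcons (nseq i false) true); last by rewrite /word /= cats0.
  by rewrite -cats1 -!catA.
have hp : ~~ has (fun x => x != 1) p by rewrite has_find -leqNgt.
have ep : p = nseq (size p) 1.
  move/hasPn: hp => hp; apply/all_pred1P/allP => x xp.
  by have := hp x xp; rewrite negbK.
have ezn : size p = n.
  by move: sp; rewrite {1}ep sumz_nseq1 => /eqP; rewrite eqz_nat => /eqP.
rewrite ep size_nseq ezn subnn /= crawl_ones //.
exists [:: n%:Z]; split; first by rewrite subn1.
split; first by rewrite /= andbT /posi ltz_nat.
split; first by rewrite big_seq1.
rewrite word_nseq1 /Cw find_nseq_true iterS iter_tau ?size_nseq //.
rewrite drop_oversize ?size_nseq // take_oversize ?size_nseq // map_nseq /= /word /= cats0 /wd ltz_nat n0 /tau.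
by case: n n0 {sp szp ep ezn hi hp}.
Qed.

Lemma sum_nseq0 (k n : nat) (p : seq int) : (k + size p = n)%N ->
  \sum_(k <= i < n) nth 0 (nseq k 0 ++ p) i = \sum_(x <- p) x.
Proof.
move=> e; rewrite -{1}(add0n k) big_addn [RHS](big_nth 0) -e addKn.
apply: eq_bigr => i _; rewrite nth_cat size_nseq.
by rewrite ltnNge leq_addl /= addnK.
Qed.

Lemma inM_of (n : nat) (p : seq int) : (0 < n)%N -> all posi p ->
  \sum_(x <- p) x = n%:Z -> inM n (nseq (n - size p) 0 ++ p).
Proof.
move=> n0 ap sp.
have sz : (size p <= n)%N by rewrite -lez_nat -sp sum_ge_size.
have pn : p != [::] by apply/eqP => e; move: sp; rewrite e big_nil; lia.
have sp0 : (0 < size p)%N by rewrite lt0n size_eq0.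
split; first by rewrite size_cat size_nseq subnK.
exists (n - size p)%N; split; first by lia.
split.
  by move=> i ilt; rewrite nth_cat size_nseq ilt nth_nseq ilt.
split.
  move=> i /andP [ki ilt]; rewrite nth_cat size_nseq ltnNge ki /=.
  have hh : (i - (n - size p) < size p)%N by lia.
  exact: (all_nthP 0 ap _ hh).
by rewrite sum_nseq0 // subnK.
Qed.

Lemma inM_dec (n : nat) (c : seq int) : inM n c ->
  exists p, c = nseq (n - size p) 0 ++ p /\ all posi p /\ \sum_(x <- p) x = n%:Z.
Proof.
move=> [sc [k [kn [h0 [hp hs]]]]].
have kn' : (k <= n)%N by lia.
have ec : c = nseq k 0 ++ drop k c.
  rewrite -{1}(cat_take_drop k c); congr (_ ++ _).
  have kc : (k <= size c)%N by rewrite sc.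
  apply: (@eq_from_nth _ 0); first by rewrite size_takel // size_nseq.
  move=> i; rewrite size_takel // => ik.
  by rewrite nth_take // h0 // nth_nseq ik.
exists (drop k c); split; first by rewrite size_drop sc; rewrite (_ : (n - (n - k) = k)%N) //; lia.
split.
  apply/(all_nthP 0) => i; rewrite size_drop sc => ilt; rewrite nth_drop; apply: hp; lia.
by rewrite -hs {2}ec sum_nseq0 // size_drop sc; lia.
Qed.

Local Close Scope ring_scope.

Theorem mainTheorem13 (n : nat) (c : seq int) :
  (1 <= n)%N -> inM n c ->
  inM n (crawl n c) /\ iter n (crawl n) c = c.
Proof.
move=> n0 /inM_dec [p0 [ec [ap0 sp0]]].
have H : forall k, exists p, iter k (crawl n) c = nseq (n - size p) 0%R ++ p /\
    all posi p /\ (\sum_(x <- p) x)%R = Posz n /\ word p = iter k Cw (word p0).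
  elim => [|k [p [e [ap [sp ew]]]]]; first by exists p0.
  have [q [e' [aq [sq wq]]]] := step n0 ap sp.
  by exists q; rewrite iterS e e' wq ew.
split.
  have [q [e' [aq [sq _]]]] := step n0 ap0 sp0.
  by rewrite ec e'; exact: inM_of.
have [p [e [ap [sp ew]]]] := H n.
have sw : size (word p0) = n.
  by apply/eqP; rewrite -eqz_nat size_word // sp0.
have pn : p0 != [::].
  by apply/eqP => e0; move: sp0; rewrite e0 big_nil; lia.
have lw : nth false (word p0) n.-1 = true by rewrite -sw nth_last last_word.
rewrite Cw_period // in ew.
by rewrite e (word_inj ap ap0 ew) -ec.
Qed.
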